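(* Fix $t>1$. For $n=1,2,\ldots$ let $a_n=1^{t^n}\cdot2^{t^{n-1}}\cdot3^{t^{n-2}}\cdots n^{t^1}$. Then $$\lim_{n\to\infty}a_n^{1/t^n}=\sigma_t^{\,t}<\infty,$$ where $\sigma_t=\prod_{n=1}^\infty n^{1/t^n}$. Moreover, with $$b_n=\sqrt[t]{a_1+\sqrt[t]{a_2+\cdots+\sqrt[t]{a_{n-1}+\sqrt[t]{a_n}}}},\qquad B_n=\sqrt[t]{1+2\sqrt[t]{1+3\sqrt[t]{1+\cdots+(n-1)\sqrt[t]{1+n\sqrt[t]{1}}}}},$$ both sequences $(b_n)_{n\ge1}$ and $(B_n)_{n\ge1}$ converge, and $\lim_{n\to\infty}b_n=\lim_{n\to\infty}B_n$.
   Context: For $a\ge0$ and $t>0$, $\sqrt[t]{a}=a^{1/t}\ge0$ denotes the nonnegative root. *)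

(* Defs.v *)
From HB Require Import structures.
From mathcomp Require Import all_boot all_order all_algebra.
From mathcomp Require Import all_classical all_reals all_analysis.
Set Implicit Arguments. Unset Strict Implicit. Unset Printing Implicit Defensive.
Import Order.TTheory GRing.Theory Num.Theory.
Local Open Scope ring_scope.

Section Defs.
Variables (R : realType) (t : R).

Definition aseq (n : nat) : R :=
  \prod_(1 <= k < n.+1) ((k%:R : R) `^ (t ^+ (n - k).+1)).

Definition sigma_partial (N : nat) : R :=
  \prod_(1 <= k < N.+1) ((k%:R : R) `^ (t ^+ k)^-1).

Fixpoint nest (c : nat -> R) (k m : nat) : R :=
  match m with
  | 0 => 0
  | m'.+1 => (c k + nest c k.+1 m') `^ t^-1
  end.

Definition b_seq (n : nat) : R := nest aseq 1 n.

Fixpoint nestB (k m : nat) : R :=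
  match m with
  | 0 => 1 `^ t^-1
  | m'.+1 => (1 + (k.+1)%:R * nestB k.+1 m') `^ t^-1
  end.

(* B_n = (1 + 2 (1 + 3 ( ... (1 + n (1)^(1/t))^(1/t) ...)^(1/t))^(1/t), n >= 1 *)
Definition B_seq (n : nat) : R := nestB 1 n.-1.

End Defs.

(* Main.v *)
Require Import Defs.
From HB Require Import structures.
From mathcomp Require Import all_boot all_order all_algebra.
From mathcomp Require Import all_classical all_reals all_analysis.
From mathcomp Require Import ring lra.
Import Order.TTheory GRing.Theory Num.Theory.
Import numFieldNormedType.Exports.
Local Open Scope classical_set_scope.
Local Open Scope ring_scope.

Section S.
Variables (R : realType) (t : R).
Hypothesis ht : 1 < t.

Let t0 : 0 < t. Proof. by apply: lt_trans ht. Qed.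

Lemma powR_prod (I : Type) (s : seq I) (P : pred I) (F : I -> R) e :
  (forall i, 0 <= F i) ->
  (\prod_(i <- s | P i) F i) `^ e = \prod_(i <- s | P i) (F i `^ e).
Proof.
move=> F0.
suff [] : 0 <= \prod_(i <- s | P i) F i /\
  (\prod_(i <- s | P i) F i) `^ e = \prod_(i <- s | P i) (F i `^ e) by [].
apply: (big_ind2 (fun x y => 0 <= x /\ x `^ e = y)).
- by rewrite powR1.
- move=> x1 x2 y1 y2 [h1 <-] [h2 <-]; split; first exact: mulr_ge0.
  by rewrite powRM.
- by move=> i _; split.
Qed.

Lemma pow_ge1 (k : nat) e : (1 <= k)%N -> 0 <= e -> 1 <= (k%:R : R) `^ e.
Proof.
move=> k1 e0; have := @ler_powR _ (k%:R : R) _ _ _ e0.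
by rewrite powRr0; apply; rewrite ler1n.
Qed.

Lemma sp_ge1 N : 1 <= sigma_partial t N.
Proof.
rewrite /sigma_partial big_nat_cond; apply: (big_ind (fun x => 1 <= x)) => //.
  by move=> x y; apply: mulr_ege1.
move=> k /andP[/andP[k1 _] _].
by apply: pow_ge1 => //; rewrite invr_ge0 exprn_ge0 // ltW.
Qed.

Lemma sp_nd : nondecreasing_seq (sigma_partial t).
Proof.
apply/nondecreasing_seqP => n; rewrite /sigma_partial [in leRHS]big_nat_recr //=.
rewrite ler_peMr //; first by apply: le_trans (sp_ge1 n).
by apply: pow_ge1 => //; rewrite invr_ge0 exprn_ge0 // ltW.
Qed.

Lemma aseq_ge0 n : 0 <= aseq t n.
Proof. by apply: prodr_ge0 => k _; apply: powR_ge0. Qed.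


Lemma sum_kr (r : R) N : r != 1 ->
  \sum_(1 <= k < N.+1) k%:R * r ^+ k =
  (r - N.+1%:R * r ^+ N.+1 + N%:R * r ^+ N.+2) / (1 - r) ^+ 2.
Proof.
move=> r1; have r1' : 1 - r != 0 by rewrite subr_eq0 eq_sym.
elim: N => [|N IH].
  by rewrite big_geq // mul0r addr0 mul1r expr1 subrr mul0r.
rewrite big_nat_recr //= IH.
rewrite -!natr1 !exprS expr0; field.
by [].
Qed.

Lemma sum_kr_le (r : R) N : 0 < r < 1 ->
  \sum_(1 <= k < N.+1) k%:R * r ^+ k <= r / (1 - r) ^+ 2.
Proof.
case/andP=> r0 r1; rewrite sum_kr ?lt_eqF //.
rewrite ler_pM2r ?invr_gt0 ?exprn_gt0 ?subr_gt0 //.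
rewrite -addrA gerDl !exprS.
have h : 0 <= r ^+ N by rewrite exprn_ge0 // ltW.
have hN : 0 <= (N%:R : R) by [].
have : 0 <= (r * r ^+ N) * (N%:R * (1 - r) + 1).
  by apply: mulr_ge0; [apply: mulr_ge0 => //; apply: ltW|nra].
rewrite -natr1; nra.
Qed.


Lemma prod_pow2 (f : nat -> R) N :
  \prod_(1 <= k < N.+1) (2:R) `^ f k = 2 `^ (\sum_(1 <= k < N.+1) f k).
Proof.
have h2 : (2:R) != 0 by rewrite pnatr_eq0.
elim: N => [|N IH]; first by rewrite !big_geq // powRr0.
by rewrite big_nat_recr //= [in RHS]big_nat_recr //= powRD ?h2 ?implybT // IH.
Qed.

Definition Sb := (2:R) `^ (t^-1 / (1 - t^-1) ^+ 2).

Lemma sp_bound N : sigma_partial t N <= Sb.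
Proof.
apply: (@le_trans _ _ (\prod_(1 <= k < N.+1) (2:R) `^ (k%:R * t^-1 ^+ k))).
  rewrite /sigma_partial; apply: ler_prod => k _; rewrite powR_ge0 /=.
  rewrite powRrM powR_mulrn // exprVn.
  apply: ge0_ler_powR.
  - by rewrite invr_ge0 exprn_ge0 // ltW.
  - by rewrite nnegrE.
  - by rewrite nnegrE exprn_ge0.
  rewrite -natrX ler_nat; apply: ltnW; exact: ltn_expl.
rewrite (prod_pow2 (fun k => k%:R * t^-1 ^+ k)); apply: ler_powR; first by rewrite ler1n.
apply: sum_kr_le; rewrite invr_gt0 t0 /= invf_lt1 //.
Qed.

Lemma sp_cvg : cvgn (sigma_partial t).
Proof.
apply: nondecreasing_is_cvgn; first exact: sp_nd.
by exists Sb => _ [n _ <-]; apply: sp_bound.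
Qed.


Lemma aseq_pow n : aseq t n `^ (t ^+ n)^-1 = sigma_partial t n `^ t.
Proof.
have tn0 : t != 0 by rewrite gt_eqF.
rewrite /aseq /sigma_partial powR_prod; last by move=> k; apply: powR_ge0.
rewrite powR_prod; last by move=> k; apply: powR_ge0.
apply: eq_big_nat => j /andP[j1 jn]; rewrite -!powRrM; congr (_ `^ _).
have e : t ^+ n.+1 = t ^+ (n-j).+1 * t ^+ j by rewrite -exprD addSn subnK.
have e' : t ^+ (n-j).+1 = t * t^+n / t^+j.
  by rewrite -exprS e mulfK // expf_neq0.
rewrite e'; field; rewrite ?expf_neq0 //.
Qed.

Lemma powR_cont (x : R) : 0 < x -> {for x, continuous (fun y : R => y `^ t)}.
Proof.
move=> x0; apply: differentiable_continuous; apply/derivable1_diffP.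
by apply: derivable_powR; rewrite in_itv /= x0.
Qed.

Lemma lim_ge1 : 1 <= limn (sigma_partial t).
Proof. exact: le_trans (sp_ge1 0) (nondecreasing_cvgn_le sp_nd sp_cvg 0). Qed.

Lemma part2 : (fun n => aseq t n `^ (t ^+ n)^-1) @ \oo --> (limn (sigma_partial t)) `^ t.
Proof.
have -> : (fun n => aseq t n `^ (t ^+ n)^-1) = (fun y : R => y `^ t) \o sigma_partial t.
  by apply/funext => n; rewrite /= aseq_pow.
apply: continuous_cvg; first by apply: powR_cont; apply: lt_le_trans lim_ge1.
exact: sp_cvg.
Qed.


Lemma nest_ge0 c k m : 0 <= nest t c k m.
Proof. by case: m => [|m] //=; apply: powR_ge0. Qed.

Lemma nestB_ge0 k m : 0 <= nestB t k m.
Proof. by case: m => [|m] //=; apply: powR_ge0. Qed.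

Lemma nest_nd c (hc : forall k, 0 <= c k) m k : nest t c k m <= nest t c k m.+1.
Proof.
elim: m k => [|m IH] k; first exact: powR_ge0.
change ((c k + nest t c k.+1 m) `^ t^-1 <= (c k + nest t c k.+1 m.+1) `^ t^-1).
apply: ge0_ler_powR.
- by rewrite invr_ge0 ltW.
- by rewrite nnegrE addr_ge0 ?nest_ge0.
- by rewrite nnegrE addr_ge0 ?nest_ge0.
by rewrite lerD2l.
Qed.

Definition L := limn (sigma_partial t) `^ t.

Lemma L_ge1 : 1 <= L.
Proof.
have := @ler_powR _ (limn (sigma_partial t)) lim_ge1 0 t (ltW t0).
by rewrite powRr0.
Qed.

Lemma aseq_le k : aseq t k <= L `^ (t ^+ k).
Proof.
have tk : t ^+ k != 0 by rewrite expf_neq0 // gt_eqF.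
rewrite -[aseq t k]powRr1 ?aseq_ge0 // -(mulVf tk) powRrM aseq_pow.
apply: ge0_ler_powR.
- by rewrite exprn_ge0 // ltW.
- by rewrite nnegrE powR_ge0.
- by rewrite nnegrE powR_ge0.
apply: ge0_ler_powR.
- by rewrite ltW.
- by rewrite nnegrE (le_trans _ (sp_ge1 k)).
- by rewrite nnegrE (le_trans _ lim_ge1).
exact: (nondecreasing_cvgn_le sp_nd sp_cvg).
Qed.

Definition cc := (2:R) `^ (t - 1)^-1.

Lemma cc_ge1 : 1 <= cc.
Proof.
have := @ler_powR _ (2:R) _ 0 (t - 1)^-1.
rewrite powRr0; apply; first by rewrite ler1n.
by rewrite invr_ge0 subr_ge0 ltW.
Qed.

Lemma cc_pow : 1 + cc <= cc `^ t.
Proof.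
have c1 := cc_ge1.
have -> : t = 1 + (t - 1) by rewrite addrC subrK.
rewrite powRD; last by rewrite (gt_eqF (lt_le_trans ltr01 c1)) implybT.
rewrite powRr1 ?(le_trans _ c1) // /cc -powRrM mulVf ?powRr1 //.
  rewrite -/cc; lra.
by rewrite subr_eq0 gt_eqF.
Qed.

Lemma nest_bound m k : nest t (aseq t) k m <= cc * L `^ (t ^+ k / t).
Proof.
have c1 := cc_ge1.
have tn0 : t != 0 by rewrite gt_eqF.
elim: m k => [|m IH] k.
  by apply: mulr_ge0; [apply: le_trans c1|apply: powR_ge0].
change ((aseq t k + nest t (aseq t) k.+1 m) `^ t^-1 <= cc * L `^ (t ^+ k / t)).
apply: (@le_trans _ _ ((L `^ (t^+k) + cc * L `^ (t^+k)) `^ t^-1)).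
  apply: ge0_ler_powR.
  - by rewrite invr_ge0 ltW.
  - by rewrite nnegrE addr_ge0 ?nest_ge0 ?aseq_ge0.
  - by rewrite nnegrE addr_ge0 ?powR_ge0 // mulr_ge0 ?powR_ge0 // (le_trans _ c1).
  apply: lerD; first exact: aseq_le.
  have -> : t ^+ k = t^+k.+1 / t by rewrite exprS mulrC mulrA mulVf // mul1r.
  exact: IH.
rewrite -{1}[L `^ (t^+k)]mul1r -mulrDl powRM; first last.
- exact: powR_ge0.
- by rewrite addr_ge0 // (le_trans _ c1).
rewrite -powRrM ler_wpM2r ?powR_ge0 //.
apply: (@le_trans _ _ ((cc `^ t) `^ t^-1)).
  apply: ge0_ler_powR; last exact: cc_pow.
  - by rewrite invr_ge0 ltW.
  - by rewrite nnegrE addr_ge0 // (le_trans _ c1).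
  - by rewrite nnegrE powR_ge0.
by rewrite -powRrM mulfV // powRr1 // (le_trans _ c1).
Qed.

Lemma aseqS k : aseq t k.+1 `^ t^-1 = aseq t k * k.+1%:R.
Proof.
have tn0 : t != 0 by rewrite gt_eqF.
have -> : aseq t k.+1 = (aseq t k * k.+1%:R) `^ t.
  rewrite powRM ?aseq_ge0 // /aseq powR_prod; last by move=> j; apply: powR_ge0.
  rewrite big_nat_recr //= subnn expr1; congr (_ * _).
  apply: eq_big_nat => j /andP[j1 jn]; rewrite -powRrM -exprSr subSn //.
by rewrite -powRrM mulfV // powRr1 // mulr_ge0 ?aseq_ge0.
Qed.

Lemma nest_B m k : nest t (aseq t) k m.+1 = aseq t k `^ t^-1 * nestB t k m.
Proof.
elim: m k => [|m IH] k.
  by rewrite /= addr0 powR1 mulr1.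
change ((aseq t k + nest t (aseq t) k.+1 m.+1) `^ t^-1 =
  aseq t k `^ t^-1 * (1 + k.+1%:R * nestB t k.+1 m) `^ t^-1).
rewrite IH aseqS -powRM ?aseq_ge0 //; last by rewrite addr_ge0 // mulr_ge0 ?nestB_ge0.
by congr (_ `^ _); ring.
Qed.

End S.

Theorem corollary25 (R : realType) (t : R) (ht : 1 < t) :
  cvgn (sigma_partial t) /\
  ((fun n => aseq t n `^ (t ^+ n)^-1) @ \oo --> (limn (sigma_partial t)) `^ t) /\
  cvgn (fun n => b_seq t n.+1) /\ cvgn (fun n => B_seq t n.+1) /\
  limn (fun n => b_seq t n.+1) = limn (fun n => B_seq t n.+1).
Proof.
have a1 : aseq t 1 = 1 by rewrite /aseq big_nat1 powR1.
have E : (fun n => b_seq t n.+1) = (fun n => B_seq t n.+1).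
  by apply/funext => n; rewrite /b_seq (@nest_B R t ht) a1 powR1 /= mul1r.
have cb : cvgn (fun n => b_seq t n.+1).
  apply: nondecreasing_is_cvgn.
    apply/nondecreasing_seqP => n; rewrite /b_seq; apply: (@nest_nd R t ht) => k; exact: aseq_ge0.
  exists (cc R t * L R t `^ (t ^+ 1 / t)) => _ [n _ <-].
  exact: (@nest_bound R t ht).
split; first exact: (@sp_cvg R t ht).
split; first exact: (@part2 R t ht).
by rewrite -E; split.
Qed.
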